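(* Let $G$ be a simple, undirected, locally finite graph and $i\sim j$ an edge such that $\sharp_\square^i(i,j)\neq\emptyset$. Then $$\sharp_\square^{\mathfrak m}(i,j)\ \ge\ \frac{\max\{|\sharp_\square^i(i,j)|,\,|\sharp_\square^j(i,j)|\}}{\gamma_{\max}(i,j)}.$$
   Context: $S_1(v)$ denotes the set of neighbours of $v$. For an edge $i\sim j$: $\sharp_\square^i(i,j)=\{k\in S_1(i)\setminus (S_1(j)\cup\{j\}) : \exists\, w\in (S_1(k)\cap S_1(j))\setminus (S_1(i)\cup\{i\})\}$, and $\sharp_\square^j(i,j)$ is defined symmetrically with the roles of $i$ and $j$ exchanged (these are the neighbours of $i$, resp. $j$, lying on a 4-cycle $i\sim k\sim w\sim j\sim i$ with no diagonal). Note $\sharp_\square^i\ne\emptyset$ iff $\sharp_\square^j\neq\emptyset$. $\gamma_{\max}(i,j)=\max\big\{\max_{k\in\sharp_\square^i}|(S_1(k)\cap S_1(j))\setminus(S_1(i)\cup\{i\})|,\ \max_{w\in\sharp_\square^j}|(S_1(w)\cap S_1(i))\setminus(S_1(j)\cup\{j\})|\big\}$. For $U\subset V$, $\mathcal D(U)$ is the set of injective maps $\varphi:U\to V$ with $z\sim\varphi(z)$ for all $z\in U$, and $\sharp_\square^{\mathfrak m}(i,j)=\max\{|U|: U\subset\sharp_\square^i,\ \exists\varphi\in\mathcal D(U)\text{ with }\varphi(U)\subset\sharp_\square^j\}$. *)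

(* Defs.v *)
From HB Require Import structures.
From mathcomp Require Import all_boot all_order all_algebra.
From mathcomp Require Import finmap.
From mathcomp Require Import boolp.
Set Implicit Arguments. Unset Strict Implicit. Unset Printing Implicit Defensive.
Local Open Scope fset_scope.

(* A simple undirected locally finite graph on a vertex type V is given by its
   neighbourhood map S1 : V -> {fset V} (finite by local finiteness). *)
Definition simple_graph (V : choiceType) (S1 : V -> {fset V}) : Prop :=
  (forall v w : V, (w \in S1 v) = (v \in S1 w)) /\ (forall v : V, v \notin S1 v).

Definition sqW (V : choiceType) (S1 : V -> {fset V}) (i j k : V) : {fset V} :=
  (S1 k `&` S1 j) `\` (S1 i `|` [fset i]).

Definition sq_i (V : choiceType) (S1 : V -> {fset V}) (i j : V) : {fset V} :=
  [fset k in S1 i `\` (S1 j `|` [fset j]) | sqW S1 i j k != fset0].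

Definition sq_j (V : choiceType) (S1 : V -> {fset V}) (i j : V) : {fset V} :=
  sq_i S1 j i.

Definition gamma_max (V : choiceType) (S1 : V -> {fset V}) (i j : V) : nat :=
  maxn (\max_(k <- sq_i S1 i j) #|` sqW S1 i j k|)
       (\max_(w <- sq_j S1 i j) #|` sqW S1 j i w|).

Definition in_D (V : choiceType) (S1 : V -> {fset V}) (U : {fset V}) (phi : V -> V) : Prop :=
  {in U &, injective phi} /\ (forall z, z \in U -> phi z \in S1 z).

Definition sq_m (V : choiceType) (S1 : V -> {fset V}) (i j : V) : nat :=
  \max_(U <- enum_fset (fpowerset (sq_i S1 i j))
        | `[< exists phi : V -> V, in_D S1 U phi /\
                (forall z, z \in U -> phi z \in sq_j S1 i j) >]) #|` U|.

(* Main.v *)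
Require Import Defs.
From HB Require Import structures.
From mathcomp Require Import all_boot all_order all_algebra.
From mathcomp Require Import finmap.
From mathcomp Require Import boolp.
From mathcomp Require Import zify.
Import Order.TTheory GRing.Theory Num.Theory.
Set Implicit Arguments. Unset Strict Implicit.
Local Open Scope fset_scope.

Lemma count_lemma (V : choiceType) (R : V -> V -> bool) (c : nat) (Y : seq V) :
  forall X : {fset V},
  (forall x, x \in X -> exists2 y, y \in Y & R x y) ->
  (forall y, y \in Y -> (#|` [fset x in X | R x y]| <= c)%N) ->
  (#|` X| <= size Y * c)%N.
Proof.
elim: Y => [|y Y IH] X hX hc.
  case: (fset_0Vmem X) => [->|[x xX]]; first by rewrite cardfs0.
  by case: (hX x xX).
pose X1 := [fset x in X | R x y]; pose X2 := [fset x in X | ~~ R x y].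
have sub : X `<=` X1 `|` X2.
  apply/fsubsetP => x xX; rewrite !inE xX /=; by case: (R x y).
have h1 := fsubset_leq_card sub.
have h2 := leq_card_fsetU X1 X2.
have h3 : (#|` X1| <= c)%N by apply: hc; rewrite inE eqxx.
have h4 : (#|` X2| <= size Y * c)%N.
  apply: IH.
    move=> x; rewrite !inE => /andP [xX nR].
    case: (hX x xX) => y'; rewrite inE => /orP [/eqP ->|y'Y] R'.
      by rewrite R' in nR.
    by exists y'.
  move=> y' y'Y; apply: leq_trans (hc y' _); last by rewrite inE y'Y orbT.
  apply: fsubset_leq_card; apply/fsubsetP => x; rewrite !inE.
  by case/andP => /andP [-> _] ->.
have h5 := h2.1; apply: (leq_trans h1 (leq_trans h5 _)); rewrite -[size (y :: Y)]/((size Y).+1) mulSn; exact: leq_add h3 h4.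
Qed.

Lemma bigmax_attained (I : eqType) (r : seq I) (P : pred I) (F : I -> nat) :
  has P r -> exists2 x, x \in r & P x /\ \max_(i <- r | P i) F i = F x.
Proof.
elim: r => [|a r IH] //= hP; rewrite big_cons.
case Pa: (P a) => /=.
  case hr: (has P r).
    case: (IH hr) => x xr [Px ->].
    case: (leqP (F a) (F x)) => h.
      by exists x; [rewrite inE xr orbT | split => //; apply/maxn_idPr].
    by exists a; [rewrite inE eqxx | split => //; apply/maxn_idPl/ltnW].
  rewrite big_hasC ?hr // maxn0.
  by exists a; [rewrite inE eqxx|].
rewrite Pa /= in hP; case: (IH hP) => x xr [Px ->].
by exists x; [rewrite inE xr orbT|].
Qed.

Section G.
Variables (V : choiceType) (S1 : V -> {fset V}).
Hypothesis hsym : forall v w : V, (w \in S1 v) = (v \in S1 w).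

Lemma memW i j k w : (w \in sqW S1 i j k) = [&& w \in S1 k, w \in S1 j, w \notin S1 i & w != i].
Proof.
rewrite /sqW !inE.
by case: (w \in S1 k); case: (w \in S1 j); case: (w \in S1 i); case: (w == i).
Qed.

Lemma memA i j k : (k \in sq_i S1 i j) = [&& k \in S1 i, k \notin S1 j, k != j & sqW S1 i j k != fset0].
Proof.
rewrite /sq_i !inE.
by case: (k \in S1 i); case: (k \in S1 j); case: (k == j); case: (sqW S1 i j k != fset0).
Qed.

Lemma crossW i j k w : k \in sq_i S1 i j -> w \in sq_i S1 j i ->
  (w \in sqW S1 i j k) = (k \in sqW S1 j i w).
Proof.
rewrite !memA !memW => /and4P [k1 k2 k3 _] /and4P [w1 w2 w3 _].
by rewrite k1 k2 k3 w1 w2 w3 hsym.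
Qed.

Lemma WtoB i j k w : k \in sq_i S1 i j -> w \in sqW S1 i j k -> w \in sq_i S1 j i.
Proof.
move=> hk hw; move: (hk); rewrite memA => /and4P [k1 k2 k3 _].
move: (hw); rewrite memW => /and4P [w1 w2 w3 w4].
rewrite memA w2 w3 w4 /=; apply/fset0Pn; exists k.
by rewrite memW -hsym w1 k1 k2 k3.
Qed.

End G.

Lemma gamma1 (V : choiceType) (S1 : V -> {fset V}) i j k :
  k \in sq_i S1 i j -> (#|` sqW S1 i j k| <= gamma_max S1 i j)%N.
Proof.
move=> hk; apply: leq_trans (leq_maxl _ _).
exact: (@leq_bigmax_seq _ _ xpredT (fun k => #|` sqW S1 i j k|) k hk).
Qed.

Lemma gamma2 (V : choiceType) (S1 : V -> {fset V}) i j w :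
  w \in sq_i S1 j i -> (#|` sqW S1 j i w| <= gamma_max S1 i j)%N.
Proof.
move=> hw; apply: leq_trans (leq_maxr _ _).
exact: (@leq_bigmax_seq _ _ xpredT (fun w => #|` sqW S1 j i w|) w hw).
Qed.

Lemma main_nat (V : choiceType) (S1 : V -> {fset V}) (i j : V)
  (hG : simple_graph S1) (hne : sq_i S1 i j != fset0) :
  (maxn #|` sq_i S1 i j| #|` sq_j S1 i j| <= sq_m S1 i j * gamma_max S1 i j)%N.
Proof.
have hsym := hG.1.
rewrite /sq_j.
set A := sq_i S1 i j; set B := sq_i S1 j i; set g := gamma_max S1 i j.
have hmax : forall (U : {fset V}) phi, U `<=` A -> in_D S1 U phi ->
    (forall z, z \in U -> phi z \in B) -> (#|` U| <= sq_m S1 i j)%N.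
  move=> U phi hU hD hB; rewrite /sq_m.
  apply: (@leq_bigmax_seq _ _ _ (fun U : {fset V} => #|` U|) U).
    by change (U \in fpowerset A); rewrite fpowersetE.
  by apply/asboolP; exists phi.
have HH: has (fun U : {fset V} => `[< exists phi : V -> V, in_D S1 U phi /\
                (forall z, z \in U -> phi z \in sq_j S1 i j) >]) (enum_fset (fpowerset A)).
  apply/hasP; exists fset0.
    by change (fset0 \in fpowerset A); rewrite fpowersetE fsub0set.
  apply/asboolP; exists id; split; first by split => [x y|z]; rewrite inE.
  by move=> z; rewrite inE.
case: (@bigmax_attained _ _ _ (fun U : {fset V} => #|` U|) HH) => U hUin [/asboolP [phi [[inj adj] inB]] eqm].
have eqm' : sq_m S1 i j = #|` U| by exact: eqm.
have hUA : U `<=` A by move: hUin; change (U \in fpowerset A -> U `<=` A); rewrite fpowersetE.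
have claim1 : forall k w, k \in A -> k \notin U -> w \in sqW S1 i j k -> w \in phi @` U.
  move=> k w kA kU kw; apply/negPn/negP => hw.
  pose phi' x := if x == k then w else phi x.
  suff: (#|` k |` U| <= #|` U|)%N by rewrite cardfsU1 kU add1n ltnn.
  rewrite -[X in (_ <= X)%N]eqm'; apply: (hmax _ phi').
  - apply/fsubsetP => x /fset1UP [->|/(fsubsetP hUA)] //.
  - split.
      move=> x y hx hy; rewrite /phi'.
      case: (eqVneq x k) => [->|xk]; case: (eqVneq y k) => [->|yk] //.
      + move: hy; rewrite !inE (negbTE yk) /= => hy e.
        by case/negP: hw; apply/imfsetP; exists y.
      + move: hx; rewrite !inE (negbTE xk) /= => hx e.
        by case/negP: hw; apply/imfsetP; exists x.
      + move: hx hy; rewrite !inE (negbTE xk) (negbTE yk) /=; exact: inj.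
    move=> z hz; rewrite /phi'; case: (eqVneq z k) => [e|zk].
      rewrite e.
      by move: kw; rewrite memW => /and4P [].
    by case/fset1UP: hz => [e|]; [rewrite e eqxx in zk|exact: adj].
  - move=> z hz; rewrite /phi'; case: (eqVneq z k) => [e|zk].
      exact: (WtoB hsym kA kw).
    by case/fset1UP: hz => [e|]; [rewrite e eqxx in zk|exact: inB].
have claim2 : forall w k, w \in B -> w \notin phi @` U -> k \in sqW S1 j i w -> k \in U.
  move=> w k wB wU kw; have kA : k \in A := WtoB hsym wB kw.
  apply/negPn/negP => kU; case/negP: wU; apply: (claim1 k w kA kU).
  by rewrite (crossW hsym kA wB).
have phiW : forall z, z \in U -> phi z \in sqW S1 i j z.
  move=> z zU; have zA := fsubsetP hUA z zU; have := inB z zU.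
  rewrite /sq_j -/B => pB; move: (pB); rewrite memA => /and4P [p1 p2 p3 _].
  by rewrite memW (adj z zU) p1 p2 p3.
have zW : forall z, z \in U -> z \in sqW S1 j i (phi z).
  move=> z zU; have zA := fsubsetP hUA z zU.
  by rewrite -(crossW hsym zA (inB z zU)) phiW.
have gpos : (0 < g)%N.
  case/fset0Pn: hne => k kA.
  apply: leq_trans (gamma1 kA); rewrite cardfs_gt0.
  by move: kA; rewrite memA => /and4P [].
have hAU : (#|` A `\` U| <= #|` U| * g.-1)%N.
  apply: (@count_lemma V (fun k z => phi z \in sqW S1 i j k) g.-1 (enum_fset U) (A `\` U)).
  - move=> x /fsetDP [xA xU].
    have: sqW S1 i j x != fset0 by move: xA; rewrite memA => /and4P [].
    case/fset0Pn => w xw; case/imfsetP: (claim1 x w xA xU xw) => z zU e.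
    by exists z => //; rewrite -e.
  - move=> z zU.
    apply: (@leq_trans #|` sqW S1 j i (phi z) `\ z|).
      apply: fsubset_leq_card; apply/fsubsetP => x; rewrite in_fset /= => /andP [hx hp].
      case/fsetDP: hx => xA xU.
      apply/fsetD1P; split; first by apply: contraNneq xU => ->.
      by rewrite -(crossW hsym xA (inB z zU)).
    have := cardfsD1 z (sqW S1 j i (phi z)); rewrite zW //.
    have := gamma2 (inB z zU); lia.
have hBU : (#|` B `\` (phi @` U)| <= #|` U| * g.-1)%N.
  apply: (@count_lemma V (fun w z => w \in sqW S1 i j z) g.-1 (enum_fset U) (B `\` (phi @` U))).
  - move=> x /fsetDP [xB xU].
    have: sqW S1 j i x != fset0 by move: xB; rewrite memA => /and4P [].
    case/fset0Pn => k kx; have kU := claim2 x k xB xU kx.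
    exists k => //; by rewrite (crossW hsym (fsubsetP hUA k kU) xB).
  - move=> z zU.
    apply: (@leq_trans #|` sqW S1 i j z `\ phi z|).
      apply: fsubset_leq_card; apply/fsubsetP => x; rewrite in_fset /= => /andP [hx hp].
      case/fsetDP: hx => xB xU.
      apply/fsetD1P; split => //; apply: contraNneq xU => ->.
      by apply/imfsetP; exists z.
    have := cardfsD1 (phi z) (sqW S1 i j z); rewrite phiW //.
    have := gamma1 (fsubsetP hUA z zU); lia.
have hPB : phi @` U `<=` B by apply/fsubsetP => x /imfsetP [z zU ->]; exact: inB.
have hc : #|` phi @` U| = #|` U| by apply/eqP/card_in_imfsetP.
have hA1 := cardfsDS hUA; have hA2 := fsubset_leq_card hUA.
have hB1 := cardfsDS hPB; have hB2 := fsubset_leq_card hPB.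
have hg : (#|` U| * g = #|` U| * g.-1 + #|` U|)%N by rewrite -{1}(prednK gpos) mulnS addnC.
rewrite eqm' geq_max; apply/andP; split; lia.
Qed.

Local Open Scope ring_scope.

Theorem mainTheorem3 (V : choiceType) (S1 : V -> {fset V}) (i j : V)
  (hG : simple_graph S1) (hij : j \in S1 i) (hne : sq_i S1 i j != fset0) :
  (maxn #|` sq_i S1 i j| #|` sq_j S1 i j|)%:R / (gamma_max S1 i j)%:R
    <= (sq_m S1 i j)%:R :> rat.
Proof.
have h := main_nat hG hne.
case: (posnP (gamma_max S1 i j)) => [->|gp].
  rewrite invr0 mulr0; exact: ler0n.
rewrite ler_pdivrMr; last by rewrite ltr0n.
rewrite -natrM ler_nat; exact: h.
Qed.
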